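(* Let $(\Omega,\mathcal{F})$ be a measurable space and $T:\Omega\to\Omega$ a measurable map. Let $\mathbb{V}(A)=\sup_{P\in\Theta}P(A)$, $A\in\mathcal{F}$, be an upper probability, where $\Theta=\{P \text{ probability on }(\Omega,\mathcal{F}) : P(A)\le \mathbb{V}(A)\ \forall A\in\mathcal{F}\}$. Assume $\mathbb{V}$ is continuous (from above), $T$-invariant, and $T$-ergodic. Let $\Theta_0$ be the set of $T$-invariant probabilities in $\Theta$. Let $P^*$ be a $T$-ergodic probability on $(\Omega,\mathcal{F})$. If there exists $P\in\Theta_0$ such that $P^*$ is absolutely continuous with respect to $P$, then $P^*\in\Theta_0$.
   Context: $\mathcal{I}=\{A\in\mathcal{F}: T^{-1}A=A\}$ is the $T$-invariant $\sigma$-algebra. $\mathbb{V}$ is continuous if $\mathbb{V}(A_n)\to 0$ whenever $A_n\in\mathcal{F}$, $A_n\downarrow\emptyset$. $\mathbb{V}$ is $T$-invariant if $\mathbb{V}(T^{-1}A)=\mathbb{V}(A)$ for all $A\in\mathcal{F}$. A continuous upper probability $\mathbb{V}$ is $T$-ergodic if $\mathbb{V}(A)\in\{0,1\}$ for every $A\in\mathcal{I}$. A probability $P$ is $T$-invariant if $P(T^{-1}A)=P(A)$ for all $A\in\mathcal{F}$, and $T$-ergodic if it is $T$-invariant and $P(A)\in\{0,1\}$ for all $A\in\mathcal{I}$. *)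

(* Defs.v *)
From HB Require Import structures.
From mathcomp Require Import all_boot all_order all_algebra.
From mathcomp Require Import all_classical all_reals all_analysis.
Set Implicit Arguments. Unset Strict Implicit. Unset Printing Implicit Defensive.
Import Order.TTheory GRing.Theory Num.Theory.
Local Open Scope classical_set_scope.
Local Open Scope ring_scope.
Local Open Scope ereal_scope.

Section upper_prob.
Context (d : measure_display) (Omega : measurableType d) (R : realType).

Definition invariant_set (T : Omega -> Omega) (A : set Omega) : Prop :=
  measurable A /\ T @^-1` A = A.

Definition core (V : set Omega -> \bar R) : set (probability Omega R) :=
  [set P : probability Omega R | forall A, measurable A -> P A <= V A].

Definition is_upper_probability (V : set Omega -> \bar R) : Prop :=
  forall A, measurable A -> V A = ereal_sup [set P A | P in core V].

Definition continuous_capacity (V : set Omega -> \bar R) : Prop :=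
  forall F : nat -> set Omega, (forall n, measurable (F n)) ->
    (forall n, F n.+1 `<=` F n) -> \bigcap_n F n = set0 ->
    (V \o F) @ \oo --> 0.

Definition V_invariant (T : Omega -> Omega) (V : set Omega -> \bar R) : Prop :=
  forall A, measurable A -> V (T @^-1` A) = V A.

Definition V_ergodic (T : Omega -> Omega) (V : set Omega -> \bar R) : Prop :=
  forall A, invariant_set T A -> V A = 0 \/ V A = 1.

Definition P_invariant (T : Omega -> Omega) (P : probability Omega R) : Prop :=
  forall A, measurable A -> P (T @^-1` A) = P A.

Definition P_ergodic (T : Omega -> Omega) (P : probability Omega R) : Prop :=
  P_invariant T P /\ forall A, invariant_set T A -> P A = 0 \/ P A = 1.

Definition invariant_core (T : Omega -> Omega) (V : set Omega -> \bar R)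
  : set (probability Omega R) :=
  [set P | core V P /\ P_invariant T P].

End upper_prob.

(* Main.v *)
Require Import Defs.
From HB Require Import structures.
From mathcomp Require Import all_boot all_order all_algebra.
From mathcomp Require Import all_classical all_reals all_analysis.
From mathcomp Require Import measurable_realfun.
From mathcomp Require Import ring lra.
Import Order.TTheory GRing.Theory Num.Theory.
Local Open Scope classical_set_scope.
Local Open Scope ring_scope.
Section comb.
Context (R : realType).

Lemma cover_bound (a : R) (N : nat) (al be : nat -> R) :
  0 <= a -> (forall j, 0 <= al j <= 1) -> (forall j, 0 <= be j <= 1) ->
  (forall j, be j = 1 \/ exists n, (0 < n <= N)%N /\
       \sum_(j <= i < j + n) al i < n%:R * a) ->
  forall L, \sum_(0 <= j < L) al j <= a * (L + N)%:R + N%:R + \sum_(0 <= j < L) be j.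
Proof.
move=> a0 hal hbe hcov.
pose good j := \sum_(0 <= i < j) al i <= a * j%:R + \sum_(0 <= i < j) be i.
have step j : good j -> exists j', [/\ (j < j')%N, (j' <= j + maxn N 1)%N & good j'].
  rewrite /good => gj; case: (hcov j) => [b1|[n [/andP[n0 nN] hs]]].
    exists j.+1; split; [by []|by rewrite -addn1 leq_add2l leq_maxr|].
    rewrite !big_nat_recr //= b1 -addn1 natrD mulrDr mulr1.
    have := hal j; move=> /andP[_ al1]. lra.
  exists (j + n)%N; split.
  - by rewrite -{1}(addn0 j) ltn_add2l.
  - by rewrite leq_add2l (leq_trans nN) // leq_maxl.
  rewrite /good (big_cat_nat (leq0n j) (leq_addr n j)) /= [X in _ <= _ + X](big_cat_nat (leq0n j) (leq_addr n j)) /=.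
  have : 0 <= \sum_(j <= i < j + n) be i by apply: sumr_ge0 => i _; case/andP: (hbe i).
  rewrite natrD mulrDr. lra.
have ex L : exists j, [/\ (L <= j)%N, (j <= L + N)%N & good j].
  elim: L => [|L [j [Lj jLN gj]]].
    by exists 0%N; split => //; rewrite /good !big_geq // mulr0 addr0.
  case: (ltnP L j) => Lj'.
    by exists j; split => //; rewrite addSn (leq_trans jLN) // leqnSn.
  have jL : j = L by apply/eqP; rewrite eqn_leq Lj' Lj.
  subst j; case: (step L gj) => j' [h1 h2 h3]; exists j'; split => //.
  rewrite (leq_trans h2) // addSn -addnS leq_add2l.
  by rewrite geq_max ltnS leq0n andbT leqnSn.
move=> L; case: (ex L) => j [Lj jLN gj].
have e1 : \sum_(0 <= i < L) al i <= \sum_(0 <= i < j) al i.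
  rewrite [X in _ <= X](big_cat_nat (leq0n L) Lj) /= lerDl.
  by apply: sumr_ge0 => i _; case/andP: (hal i).
have e2 : \sum_(0 <= i < j) be i <= \sum_(0 <= i < L) be i + N%:R.
  rewrite (big_cat_nat (leq0n L) Lj) /= lerD2l.
  apply: (le_trans (y := \sum_(L <= i < j) (1 : R))).
    by apply: ler_sum => i _; case/andP: (hbe i).
  rewrite sumr_const_nat ler_nat leq_subLR //.
have e3 : a * j%:R <= a * (L + N)%:R by rewrite ler_wpM2l // ler_nat.
rewrite /good in gj. lra.
Qed.
End comb.
Local Open Scope ereal_scope.
Lemma int_bound d (Omega : measurableType d) (R : realType) (Q : probability Omega R)
  (n m : nat) (w w' : nat -> R) (E E' : nat -> set Omega) (K : R) :
  (forall k, measurable (E k)) -> (forall k, measurable (E' k)) ->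
  (forall k, (0 <= w k)%R) -> (forall k, (0 <= w' k)%R) -> (0 <= K)%R ->
  (forall x, \sum_(0 <= k < n) w k * \1_(E k) x <=
             \sum_(0 <= k < m) w' k * \1_(E' k) x + K)%R ->
  \sum_(0 <= k < n) (w k)%:E * Q (E k) <= \sum_(0 <= k < m) (w' k)%:E * Q (E' k) + K%:E.
Proof.
move=> mE mE' w0 w'0 K0 hx.
have mf (F : nat -> set Omega) (u : nat -> R) : (forall k, measurable (F k)) ->
    forall k, measurable_fun [set: Omega] (fun x : Omega => ((u k * \1_(F k) x)%R)%:E).
  move=> mF k; apply/measurable_EFinP; apply: measurable_funM.
    exact: measurable_cst.
  exact: measurable_indic.
have Ls (F : nat -> set Omega) (u : nat -> R) p : (forall k, measurable (F k)) ->
    (forall k, (0 <= u k)%R) ->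
    \sum_(0 <= k < p) (u k)%:E * Q (F k) =
    \int[Q]_(x in setT) ((\sum_(0 <= k < p) u k * \1_(F k) x)%R)%:E.
  move=> mF u0; under eq_integral do rewrite -sumEFin.
  rewrite ge0_integral_sum //; last first.
    by move=> k x _; rewrite lee_fin mulr_ge0 // indicE ler0n.
    exact: mf.
  apply: eq_bigr => k _.
  rewrite (@integralZl_indic _ _ _ _ _ measurableT (fun _ => F k)) //; last first.
    by move=> /lt_le_trans/(_ (u0 k)); rewrite ltxx.
  by rewrite integral_indic // setIT.
rewrite (Ls E w) // (Ls E' w') //.
have eK : \int[Q]_(x in setT) ((\sum_(0 <= k < m) w' k * \1_(E' k) x)%R)%:E + K%:E =
   \int[Q]_(x in setT) (((\sum_(0 <= k < m) w' k * \1_(E' k) x)%R)%:E + (cst K%:E) x).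
  rewrite ge0_integralD //.
  - rewrite integral_cst //.
    congr (_ + _); rewrite -[LHS]mule1; congr (_ * _).
    by apply/esym; apply: probability_setT.
  - by move=> x _; rewrite lee_fin sumr_ge0 // => k _; rewrite mulr_ge0 // indicE ler0n.
  - by apply/measurable_EFinP; apply: measurable_sum => k; apply: measurable_funM; [exact: measurable_cst|exact: measurable_indic].
rewrite eK.
apply: ge0_le_integral => //.
- by move=> x _; rewrite lee_fin sumr_ge0 // => k _; rewrite mulr_ge0 // indicE ler0n.
- apply/measurable_EFinP; apply: measurable_sum => k.
  apply: measurable_funM; [exact: measurable_cst|exact: measurable_indic].
- apply: emeasurable_funD.
    apply/measurable_EFinP; apply: measurable_sum => k.
    apply: measurable_funM; [exact: measurable_cst|exact: measurable_indic].
  exact: measurable_cst.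
- by move=> x _; rewrite /= -EFinD lee_fin.
Qed.
Local Open Scope ereal_scope.
Lemma indic_pre (T : Type) (R : realType) (A : set T) (f : T -> T) (x : T) :
  \1_(f @^-1` A) x = \1_A (f x) :> R.
Proof. by rewrite !indicE. Qed.

Lemma indic01 (T : Type) (R : realType) (A : set T) (x : T) :
  (0 <= \1_A x :> R)%R && (\1_A x <= 1 :> R)%R.
Proof. by rewrite indicE; case: (x \in A); rewrite ?lexx ?ler01. Qed.

Lemma ev_lt (R : realType) (u : nat -> \bar R) (l z : \bar R) :
  u @ \oo --> l -> l < z -> exists M, forall n, (M <= n)%N -> u n < z.
Proof.
move=> ul lz; have := ul _ (open_ereal_lt' lz).
by case=> M _ HM; exists M => n; exact: HM.
Qed.

Lemma ev_gt (R : realType) (u : nat -> \bar R) (l z : \bar R) :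
  u @ \oo --> l -> z < l -> exists M, forall n, (M <= n)%N -> z < u n.
Proof.
move=> ul lz; have := ul _ (open_ereal_gt' lz).
by case=> M _ HM; exists M => n; exact: HM.
Qed.
Arguments ev_lt {R u l z}.
Arguments ev_gt {R u l z}.
Arguments int_bound {d Omega R}.
Arguments cover_bound {R a N al be}.
Lemma arith_fin (R : realType) (cl gl p n cn : R) :
  (cl <= gl + (cl - p + cn + n))%R -> (gl <= p / 2)%R -> (cn <= n)%R -> (4 * n < p)%R -> False.
Proof. move=> *; lra. Qed.
Theorem lemma3p2 (d : measure_display) (Omega : measurableType d) (R : realType)
  (T : Omega -> Omega) (V : set Omega -> \bar R) (Pstar : probability Omega R) :
  measurable_fun setT T ->
  is_upper_probability V ->
  continuous_capacity V ->
  V_invariant T V ->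
  V_ergodic T V ->
  P_ergodic T Pstar ->
  (exists P : probability Omega R,
      invariant_core T V P /\ (Pstar : set Omega -> \bar R) `<< P) ->
  invariant_core T V Pstar.
Proof.
move=> mT hUP hcont hVinv hVerg [PsInv PsErg] [P [[PcoreV Pinv] Pdom]].
split => //.
move=> A mA; rewrite leNgt; apply/negP => hlt.
have mT' X : measurable X -> measurable (T @^-1` X).
  by move=> mX; rewrite -[T @^-1` X]setTI; exact: mT.
have mit k X : measurable X -> measurable (iter k T @^-1` X).
  elim: k X => [|k IH] X mX //; exact: (IH _ (mT' _ mX)).
have Vit k X : measurable X -> V (iter k T @^-1` X) = V X.
  elim: k X => [|k IH] X mX //.
  by rewrite -(hVinv X mX) -(IH _ (mT' _ mX)).
have Pit k X : measurable X -> Pstar (iter k T @^-1` X) = Pstar X.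
  elim: k X => [|k IH] X mX //.
  by rewrite -(PsInv X mX) -(IH _ (mT' _ mX)).
have Pfin (Q : probability Omega R) X : measurable X -> Q X = (fine (Q X))%:E.
  move=> mX; rewrite fineK // ge0_fin_numE ?measure_ge0 //.
  exact: le_lt_trans (probability_le1 Q mX) (ltry 1).
set c := fine (Pstar A).
have ec : Pstar A = c%:E by exact: Pfin.
have VA0 : 0 <= V A by apply: le_trans (PcoreV A mA); exact: measure_ge0.
have VAfin : V A \is a fin_num.
  rewrite ge0_fin_numE //; apply: lt_le_trans hlt _.
  exact: le_trans (probability_le1 Pstar mA) (leey _).
set v := fine (V A).
have ev : V A = v%:E by rewrite fineK.
have c1 : (c <= 1)%R by rewrite -lee_fin -ec; exact: probability_le1.
have v0 : (0 <= v)%R by rewrite -lee_fin -ev.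
have vc : (v < c)%R by rewrite -lte_fin -ev -ec.
set eps := ((c - v) / 4)%R.
have eps0 : (0 < eps)%R by rewrite divr_gt0 // subr_gt0.
have eps4 : (eps * 4 = c - v)%R by rewrite /eps mulfVK // pnatr_eq0.
set a := (c - eps)%R.
have a0 : (0 <= a)%R by rewrite /a; lra.
have a1 : (a <= 1)%R by rewrite /a; lra.
set b := (c - 2 * eps)%R.
have b0 : (0 < b)%R by rewrite /b; lra.
set delta := (v / b)%R.
have delta1 : (delta < 1)%R by rewrite /delta ltr_pdivrMr // mul1r /b; lra.
pose Sn (x : Omega) (n : nat) : R := (\sum_(0 <= k < n) \1_(iter k T @^-1` A) x)%R.
have mSn n : measurable_fun setT (fun x => Sn x n).
  apply: measurable_sum => k; apply: measurable_indic; exact: mit.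
have mle (r : R) n : measurable [set x | (r <= Sn x n)%R].
  have := measurable_fun_ler (@measurable_cst _ _ Omega R setT r) (mSn n) measurableT.
  by move=> /(_ [set true] I); rewrite setTI.
have mlt (r : R) n : measurable [set x | (Sn x n < r)%R].
  have := measurable_fun_ltr (mSn n) (@measurable_cst _ _ Omega R setT r) measurableT.
  by move=> /(_ [set true] I); rewrite setTI.
have S0 x : Sn x 0%N = 0%R by rewrite /Sn big_geq.
have Sge0 x n : (0 <= Sn x n)%R.
  by apply: sumr_ge0 => k _; case/andP: (indic01 _ R (iter k T @^-1` A) x).
have SS x n : Sn x n.+1 = (\1_A x + Sn (T x) n)%R.
  rewrite /Sn big_nat_recl // indic_pre /=; congr (_ + _)%R.
  by apply: eq_bigr => k _; rewrite !indic_pre iterSr.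
pose D (M : nat) := [set x | forall n : nat, (n%:R * a - M%:R <= Sn x n)%R].
pose B := \bigcup_M D M.
have mD M : measurable (D M).
  have -> : D M = \bigcap_n [set x | (n%:R * a - M%:R <= Sn x n)%R].
    by apply/seteqP; split => x /=; [move=> h n _; exact: h | move=> h n; exact: h].
  by apply: bigcapT_measurable => n; exact: mle.
have mB : measurable B by exact: bigcupT_measurable.
have DS M : D M `<=` D M.+1.
  move=> x h n; apply: le_trans (h n); rewrite lerD2l lerN2 ler_nat; exact: leqnSn.
have invB : T @^-1` B = B.
  apply/seteqP; split => x.
  - move=> [M _ h]; exists M.+1 => //= n.
    case: n => [|n]; first by rewrite S0 mul0r sub0r oppr_le0 ler0n.
    rewrite SS; have := h n; case/andP: (indic01 _ R A x) => i0 i1 hn.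
    rewrite -addn1 -(addn1 M) !natrD mulrDl mul1r; lra.
  - move=> [M _ h]; exists M.+1 => //= n.
    have := h n.+1; rewrite SS; case/andP: (indic01 _ R A x) => i0 i1 hn.
    move: hn; rewrite -addn1 -(addn1 M) !natrD mulrDl mul1r; lra.
have IB : invariant_set T B := conj mB invB.
have PB1 : Pstar B = 1.
  case: (PsErg B IB) => // PB0; exfalso.
  pose G (N : nat) := \bigcup_(n in [set n : nat | (0 < n <= N)%N])
                        [set x | (Sn x n < n%:R * a)%R].
  have mG N : measurable (G N) by apply: bigcup_measurable => n _; exact: mlt.
  have ndG : nondecreasing_seq G.
    move=> N N' NN'; apply/subsetPset => x [n /= /andP[n0 nN] h]; exists n => //=.
    by rewrite n0 (leq_trans nN NN').
  have cvG := @nondecreasing_cvg_mu _ _ _ Pstar G mG (bigcupT_measurable _ mG) ndG.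
  have UG1 : 1 <= Pstar (\bigcup_N G N).
    have <- : Pstar (~` B) = 1 by rewrite probability_setC // PB0 sube0.
    apply: le_measure; rewrite ?inE.
    - exact: measurableC.
    - exact: bigcupT_measurable.
    move=> x nBx; have : ~ D 0%N x by move=> h; apply: nBx; exists 0%N.
    move=> /existsNP [n]; rewrite subr0 => /negP; rewrite -ltNge => hn.
    exists n => //; exists n => //=; rewrite leqnn andbT lt0n.
    by apply/negP => /eqP n0; subst n; move: hn; rewrite S0 mul0r ltxx.
  have eps2 : (1 - eps / 2)%:E < Pstar (\bigcup_N G N).
    by apply: lt_le_trans UG1; rewrite lte_fin; lra.
  have [N HN] := ev_gt cvG eps2.
  have hGN := HN N (leqnn _); rewrite /= in hGN.
  set g := fine (Pstar (G N)).
  have eg : Pstar (G N) = g%:E by exact: Pfin.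
  have g1 : (1 - eps / 2 < g)%R by rewrite -lte_fin -eg.
  have eCg : Pstar (~` G N) = (1 - g)%:E by rewrite probability_setC // eg.
  set L := (Num.truncn (4 * N%:R / eps)).+1.
  have hL : (4 * N%:R < L%:R * eps)%R by rewrite -ltr_pdivrMr // truncnS_gt.
  set K := (a * (L + N)%:R + N%:R)%R.
  have K0 : (0 <= K)%R by rewrite /K addr_ge0 // mulr_ge0.
  have hpt : forall x : Omega, (\sum_(0 <= k < L) 1 * \1_(iter k T @^-1` A) x <=
      \sum_(0 <= k < L) 1 * \1_(iter k T @^-1` (~` G N)) x + K)%R.
    move=> x.
    have -> : (\sum_(0 <= k < L) (1 : R) * \1_(iter k T @^-1` A) x =
              \sum_(0 <= j < L) (\1_A (iter j T x) : R))%R.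
      by apply: eq_bigr => k _; rewrite mul1r indic_pre.
    have -> : (\sum_(0 <= k < L) (1 : R) * \1_(iter k T @^-1` ~` G N) x =
              \sum_(0 <= j < L) (\1_(~` G N) (iter j T x) : R))%R.
      by apply: eq_bigr => k _; rewrite mul1r indic_pre.
    rewrite addrC.
    apply: (cover_bound (al := fun j => \1_A (iter j T x))
      (be := fun j => \1_(~` G N) (iter j T x)) (N := N) a0
      (fun j => indic01 _ R A (iter j T x)) (fun j => indic01 _ R _ (iter j T x)) _ L) => j.
    have [hg|hg] := pselect (G N (iter j T x)); last first.
      by left; rewrite indicE mem_set.
    right; case: hg => n /= /andP[n0 nN] hn; exists n; split; first by rewrite n0.
    rewrite (_ : \sum_(j <= i < j + n) _ = \sum_(0 <= i < n) \1_A (iter (i + j) T x))%R;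
      last by rewrite -{1}[j]add0n big_addn addKn.
    apply: le_lt_trans hn; rewrite le_eqVlt; apply/orP; left; apply/eqP.
    by rewrite /Sn; apply: eq_bigr => i _; rewrite indic_pre iterD.
  have hI := int_bound Pstar L L (fun _ => 1%R) (fun _ => 1%R)
    (fun k => iter k T @^-1` A) (fun k => iter k T @^-1` ~` G N) K
    (fun k => mit k A mA) (fun k => mit k _ (measurableC (mG N)))
    (fun _ => ler01) (fun _ => ler01) K0 hpt.
  move: hI.
  under eq_bigr do rewrite mul1e (Pit _ _ mA) ec.
  under [X in _ <= X + _]eq_bigr do rewrite mul1e (Pit _ _ (measurableC (mG N))) eCg.
  rewrite !sumEFin !sumr_const_nat subn0 -EFinD lee_fin /K.
  rewrite -[(c *+ L)%R]mulr_natr -[((1 - g) *+ L)%R]mulr_natr natrD => h.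
  set l := L%:R in h hL *; set n := N%:R in h hL *.
  have h1 : ((1 - g) * l <= (eps * l) / 2)%R.
    by rewrite mulrAC ler_wpM2r // ?ler0n //; lra.
  have h2 : ((c - eps) * n <= n)%R by rewrite ler_piMl // ler0n.
  have h3 : (4 * n < eps * l)%R by rewrite [(eps * l)%R]mulrC.
  have h4 : ((c - eps) * (l + n) = c * l - eps * l + (c - eps) * n)%R.
    by rewrite mulrDr mulrBl.
  rewrite /a h4 in h.
  exact: (@arith_fin R _ _ _ _ _ h h1 h2 h3).
have PBn0 : P B != 0.
  apply/eqP => h.
  have hnull : P.-null_set B.
    move=> X mX XB; apply/eqP; rewrite eq_le measure_ge0 andbT -h.
    by apply: le_measure; rewrite ?inE.
  have := Pdom B hnull B mB (@subset_refl _ B).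
  by rewrite PB1 => /eqP; rewrite onee_eq0.
have VB1 : V B = 1.
  case: (hVerg B IB) => // VB0; exfalso; move/eqP: PBn0; apply.
  apply/eqP; rewrite eq_le measure_ge0 andbT -VB0; exact: PcoreV.
have subadd X Y : measurable X -> measurable Y -> V (X `|` Y) <= V X + V Y.
  move=> mX mY; rewrite hUP; last exact: measurableU.
  apply: ub_ereal_sup => _ [Q HQ <-].
  apply: le_trans (measureU2 Q mX mY) _.
  by apply: leeD; [exact: HQ|exact: HQ].
have VD M : V (D M) <= delta%:E.
  rewrite hUP //; apply: ub_ereal_sup => _ [Q HQ <-].
  set n := (Num.truncn (M%:R / eps)).+1.
  have hn : (M%:R < n%:R * eps)%R by rewrite -ltr_pdivrMr // truncnS_gt.
  pose E := [set x | (n%:R * b <= Sn x n)%R].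
  have mE : measurable E by exact: mle.
  have DE : D M `<=` E.
    move=> x h; apply: le_trans (h n); rewrite /a /b.
    rewrite !mulrBr; lra.
  have QDE : Q (D M) <= Q E by apply: le_measure; rewrite ?inE.
  have hpt : forall x : Omega,
     (\sum_(0 <= k < 1) (n%:R * b) * \1_E x <=
      \sum_(0 <= k < n) (1 : R) * \1_(iter k T @^-1` A) x + 0)%R.
    move=> x; rewrite big_nat1 addr0.
    have -> : (\sum_(0 <= k < n) (1 : R) * \1_(iter k T @^-1` A) x = Sn x n)%R.
      by apply: eq_bigr => k _; rewrite mul1r.
    rewrite indicE; case: (boolP (x \in E)) => [/set_mem hx|_].
      by rewrite mulr1.
    by rewrite mulr0.
  have nb0 : (0 <= n%:R * b)%R by rewrite mulr_ge0 // ltW.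
  have hI := int_bound Q 1%N n (fun _ => n%:R * b)%R (fun _ => 1%R)
    (fun _ => E) (fun k => iter k T @^-1` A) 0%R
    (fun _ => mE) (fun k => mit k A mA) (fun _ => nb0) (fun _ => ler01) (lexx 0%R) hpt.
  move: hI; rewrite big_nat1 adde0 (Pfin Q E mE) -EFinM => h1.
  have h2 : \sum_(0 <= k < n) (1%R)%:E * Q (iter k T @^-1` A) <= (v *+ n)%:E.
    have -> : (v *+ n)%:E = \sum_(0 <= k < n) v%:E by rewrite sumEFin sumr_const_nat subn0.
    apply: lee_sum => k _; rewrite mul1e -ev -(Vit k A mA).
    by apply: HQ; exact: mit.
  have h3 := le_trans h1 h2; rewrite lee_fin in h3.
  apply: le_trans QDE _; rewrite (Pfin Q E mE) lee_fin /delta ler_pdivlMr //.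
  have n0 : (0 < n%:R :> R)%R by rewrite ltr0n.
  move: h3; rewrite -[(v *+ n)%R]mulr_natl -mulrA ler_pM2l // => h3.
  by rewrite mulrC.
have DB M : D M `<=` B by move=> x h; exists M.
have cF : (V \o (fun M => B `\` D M)) @ \oo --> 0.
  apply: hcont.
  - by move=> M; exact: measurableD.
  - by move=> M x [Bx nDx]; split => // h; apply: nDx; exact: DS.
  - apply/seteqP; split => // x h.
    have [M _ hM] := (h 0%N I).1; exact: (h M I).2 hM.
have d1 : (0 : \bar R) < (1 - delta)%:E by rewrite lte_fin subr_gt0.
have [M0 HM] := ev_lt cF d1.
have h0 := HM M0 (leqnn _); rewrite /= in h0.
have hle : V B <= V (D M0) + V (B `\` D M0).
  rewrite -{1}(setDUK (DB M0)); apply: subadd; [exact: mD|exact: measurableD].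
have : V (D M0) + V (B `\` D M0) < 1.
  apply: le_lt_trans (leeD2r _ (VD M0)) _.
  have : delta%:E + V (B `\` D M0) < delta%:E + (1 - delta)%:E by rewrite lteD2lE.
  rewrite -EFinD.
  have -> : (delta + (1 - delta))%R = 1%R by rewrite addrC subrK.
  by [].
by rewrite -VB1 => /(le_lt_trans hle); rewrite ltxx.
Qed.
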